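(* Let $n\ge1$, $\mathfrak g=sl(n+1,\mathbb C)$, $M=\mathbb C[p_1,\dots,p_n,q_1,\dots,q_n]$ with Lie bracket $[\cdot,\cdot]_\ast$, and let $\Phi_0:\mathfrak g\to M$, $\Phi_0(X)=\tilde X$. For every $a\in\mathbb C$, the map $\Phi_a:\mathfrak g\to M[[t]]$, $\Phi_a(X)=\tilde X+ta\varphi_1(X)$, is a formal deformation of $\Phi_0$, i.e. $\Phi_a([X,Y])=[\Phi_a(X),\Phi_a(Y)]_\ast$ for all $X,Y\in\mathfrak g$ (the bracket being extended $\mathbb C[[t]]$-bilinearly to formal series).
   Context: $E_{ij}$ denotes the $(n+1)\times(n+1)$ matrix with $1$ in entry $(i,j)$ and $0$ elsewhere. Let $\Psi(p,q)$ be the $(n+1)\times(n+1)$ matrix whose first row is $(-\sum_j p_jq_j,\ q_1,\dots,q_n)$ and whose $(k+1)$-th row ($1\le k\le n$) is $p_k$ times the first row. For $X\in\mathfrak g$, $\tilde X(p,q)=\operatorname{Tr}(\Psi(p,q)X)$. Write $x=(p_1,\dots,p_n,q_1,\dots,q_n)$, let $\Lambda^{k,n+k}=1$, $\Lambda^{n+k,k}=-1$ ($1\le k\le n$), $\Lambda^{ij}=0$ otherwise, $P^l(u,v)=\sum\Lambda^{i_1j_1}\cdots\Lambda^{i_lj_l}\partial^l_{x_{i_1}\cdots x_{i_l}}u\,\partial^l_{x_{j_1}\cdots x_{j_l}}v$, and $[u,v]_\ast=\sum_{l\ge0}\frac{(-1/4)^l}{(2l+1)!}P^{2l+1}(u,v)$.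 The linear map $\varphi_1:\mathfrak g\to M$ is determined by $\varphi_1(E_{11}-E_{22})=1$, $\varphi_1(E_{kk}-E_{k+1,k+1})=0$ for $k=2,\dots,n$, $\varphi_1(E_{1,k+1})=p_k$ for $k=1,\dots,n$, and $\varphi_1(E_{ij})=0$ for $i\ge2$, $j\ne i$. *)

(* Defs.v *)
From mathcomp Require Import all_boot all_algebra.
From mathcomp Require Import mpoly.
From mathcomp Require Import complex.
From mathcomp Require Import reals.
Set Implicit Arguments. Unset Strict Implicit. Unset Printing Implicit Defensive.
Import GRing.Theory Num.Theory.
Local Open Scope ring_scope.

(* The complex numbers are modelled as  complex R = R[i]  for a real-number
   type  R : realType.  The polynomial algebra
   M = C[p_1,...,p_n,q_1,...,q_n] is  {mpoly R[i][n + n]}, with variable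
   x_i (0-indexed): x_k = p_(k+1) for k < n and x_(n+k) = q_(k+1). *)

Definition Mpoly (R : realType) (n : nat) := {mpoly R[i][n + n]}.

Definition pvar (R : realType) (n : nat) (k : 'I_n) : Mpoly R n :=
  'X_(lshift n k).
Definition qvar (R : realType) (n : nat) (k : 'I_n) : Mpoly R n :=
  'X_(rshift n k).

Definition Lam (R : realType) (n : nat) (a b : 'I_(n + n)) : R[i] :=
  if (a < n)%N && (b == a + n :> nat)%N then 1
  else if (b < n)%N && (a == b + n :> nat)%N then -1 else 0.

Definition dern (R : realType) (n : nat) (s : seq 'I_(n + n)) (u : Mpoly R n)
  : Mpoly R n := foldr (fun m p => mderiv m p) u s.

Definition Pl (R : realType) (n l : nat) (u v : Mpoly R n) : Mpoly R n :=
  \sum_(f : {ffun 'I_l -> 'I_(n + n) * 'I_(n + n)})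
     (\prod_(s : 'I_l) Lam R (f s).1 (f s).2) *:
       (dern [seq (f s).1 | s <- enum 'I_l] u *
        dern [seq (f s).2 | s <- enum 'I_l] v).

(* The series is
   finite: P^{2l+1}(u,v) = 0 as soon as 2l+1 exceeds the total degree of u,
   hence all terms with l >= msize u (= total degree + 1) vanish and the sum
   is taken over l < (msize u).+1. *)
Definition star_br (R : realType) (n : nat) (u v : Mpoly R n) : Mpoly R n :=
  \sum_(l < (msize u).+1)
     ((- (4%:R : R[i])^-1) ^+ l / ((2 * l + 1)`!)%:R) *: Pl (2 * l + 1) u v.

Definition Mser (R : realType) (n : nat) := nat -> Mpoly R n.

Definition star_ser (R : realType) (n : nat) (U V : Mser R n) : Mser R n :=
  fun k => \sum_(m < k.+1) star_br (U m) (V (k - m)%N).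

Definition Psi (R : realType) (n : nat) : 'M[Mpoly R n]_(n.+1) :=
  \matrix_(r < n.+1, c < n.+1)
    ((if unlift ord0 r is Some k then pvar R k else 1) *
     (if unlift ord0 c is Some k then qvar R k
      else - \sum_(k < n) pvar R k * qvar R k)).

Definition tilde (R : realType) (n : nat) (X : 'M[R[i]]_(n.+1)) : Mpoly R n :=
  \tr (Psi R n *m map_mx (fun z => z%:MP) X).

Definition mx_br (R : realType) (n : nat) (X Y : 'M[R[i]]_(n.+1)) :=
  X *m Y - Y *m X.

Definition Phi_a (R : realType) (n : nat) (phi : 'M[R[i]]_(n.+1) -> Mpoly R n)
  (a : R[i]) (X : 'M[R[i]]_(n.+1)) : Mser R n :=
  fun k => if k == 0%N then tilde X else if k == 1%N then a *: phi X else 0.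

(* Main.v *)
Require Import Defs.
From mathcomp Require Import all_boot all_algebra.
From mathcomp Require Import mpoly.
From mathcomp Require Import complex.
From mathcomp Require Import reals.
From mathcomp Require Import ring zify.
Set Implicit Arguments. Unset Strict Implicit. Unset Printing Implicit Defensive.
Import GRing.Theory Num.Theory.
Local Open Scope ring_scope.

Definition Q0 (R : realType) (n : nat) (u : Mpoly R n) :=
  forall i : 'I_(n + n), (n <= i)%N -> mderiv i u = 0.
Definition Q1 (R : realType) (n : nat) (u : Mpoly R n) :=
  forall i : 'I_(n + n), (n <= i)%N -> Q0 (mderiv i u).

Lemma Q0_der (R : realType) n (u : Mpoly R n) j : Q0 u -> Q0 (mderiv j u).
Proof. by move=> h i hi; rewrite mderiv_comm h // mderiv0. Qed.

Lemma Q1_der (R : realType) n (u : Mpoly R n) j : Q1 u -> Q1 (mderiv j u).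
Proof. by move=> h i hi; rewrite mderiv_comm; apply: Q0_der; apply: h. Qed.

Lemma Q0_Q1 (R : realType) n (u : Mpoly R n) : Q0 u -> Q1 u.
Proof. by move=> h i hi j hj; rewrite h // mderiv0. Qed.

Lemma dern_cons (R : realType) n x s (u : Mpoly R n) :
  dern (x :: s) u = mderiv x (dern s u).
Proof. by []. Qed.

Lemma dern_Q1 (R : realType) n s (u : Mpoly R n) : Q1 u -> Q1 (dern s u).
Proof. by elim: s => [//|x s ih] h; rewrite dern_cons; apply/Q1_der/ih. Qed.

Lemma dern_Q0 (R : realType) n s (u : Mpoly R n) : Q1 u ->
  (1 <= count (fun i : 'I_(n + n) => n <= i)%N s)%N -> Q0 (dern s u).
Proof.
elim: s => [//|x s ih] h; rewrite dern_cons /=.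
case: (leqP n x) => hx /=.
  case: (leqP 1 (count (fun i : 'I_(n + n) => n <= i)%N s)) => hc.
    by move=> _; apply/Q0_der/ih.
  by move=> _; apply: (dern_Q1 s h).
by rewrite add0n => hc; apply/Q0_der/ih.
Qed.

Lemma dern_0 (R : realType) n s (u : Mpoly R n) : Q1 u ->
  (2 <= count (fun i : 'I_(n + n) => n <= i)%N s)%N -> dern s u = 0.
Proof.
elim: s => [//|x s ih] h; rewrite dern_cons /=.
case: (leqP n x) => hx /=.
  rewrite add1n ltnS => hc.
  by rewrite (dern_Q0 h hc).
by rewrite add0n => hc; rewrite ih // mderiv0.
Qed.

Lemma Lam_q (R : realType) n (a b : 'I_(n + n)) :
  Lam R a b != 0 -> (n <= a)%N = ~~ (n <= b)%N.
Proof.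
rewrite /Lam; case: ifP => [/andP[ha /eqP hb] _|_].
  by rewrite hb leq_addl leqNgt ha.
case: ifP => [/andP[hb /eqP ha] _|_]; last by rewrite eqxx.
by rewrite ha leq_addl leqNgt hb.
Qed.

Lemma Pl_high (R : realType) n l (u v : Mpoly R n) : Q1 u -> Q1 v ->
  (3 <= l)%N -> Pl l u v = 0.
Proof.
move=> hu hv hl; rewrite /Pl big1 // => f _.
have [hall|] := boolP [forall s, Lam R (f s).1 (f s).2 != 0]; last first.
  rewrite negb_forall => /existsP[s]; rewrite negbK => /eqP hs.
  by rewrite (bigD1 s) //= hs mul0r scale0r.
pose P1 := fun s : 'I_l => (n <= (f s).1)%N.
have hc : (count P1 (enum 'I_l) +
           count (fun s : 'I_l => (n <= (f s).2)%N) (enum 'I_l) = l)%N.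
  rewrite (@eq_count _ (fun s : 'I_l => (n <= (f s).2)%N) (predC P1)); first by rewrite count_predC size_enum_ord.
  move=> s /=; rewrite /P1 (Lam_q (forallP hall s)) negbK //.
have [h1|h1] := leqP 2 (count P1 (enum 'I_l)).
  rewrite (@dern_0 _ _ _ u) ?mul0r ?scaler0 //.
  by rewrite count_map.
rewrite (@dern_0 _ _ _ v) ?mulr0 ?scaler0 //.
rewrite count_map (@eq_count _ _ (fun s : 'I_l => (n <= (f s).2)%N)) //; move: hc h1 hl; lia.
Qed.

Definition pb (R : realType) (n : nat) (u v : Mpoly R n) : Mpoly R n :=
  \sum_(a < n + n) \sum_(b < n + n) Lam R a b *: (mderiv a u * mderiv b v).

Lemma star_Pl1 (R : realType) n (u v : Mpoly R n) : Q1 u -> Q1 v ->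
  star_br u v = Pl 1 u v.
Proof.
move=> hu hv; rewrite /star_br big_ord_recl /= big1 => [|l _].
  have -> : (2 * 0 + 1)%N = 1%N by [].
  by rewrite expr0 (_ : 1`! = 1)%N // mul1r mulr1n invr1 scale1r addr0.
by rewrite Pl_high ?scaler0 //; rewrite /bump /=; lia.
Qed.

Lemma Pl1_pb (R : realType) n (u v : Mpoly R n) : Pl 1 u v = pb u v.
Proof.
rewrite /Pl /pb pair_big /=.
rewrite (reindex (fun p : 'I_(n + n) * 'I_(n + n) => [ffun _ : 'I_1 => p])) /=.
  apply: eq_bigr => p _; rewrite big_ord1 ffunE enum_ordSl enum_ord0 /=.
  by rewrite !ffunE.
exists (fun f => f ord0) => [p _|f _]; first by rewrite ffunE.
by apply/ffunP => i; rewrite ffunE (ord1 i).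
Qed.

Lemma star_pb (R : realType) n (u v : Mpoly R n) : Q1 u -> Q1 v ->
  star_br u v = pb u v.
Proof. by move=> hu hv; rewrite star_Pl1 // Pl1_pb. Qed.

Lemma pbDl (R : realType) n (u1 u2 v : Mpoly R n) : pb (u1 + u2) v = pb u1 v + pb u2 v.
Proof.
rewrite /pb -big_split; apply: eq_bigr => a _; rewrite -big_split.
by apply: eq_bigr => b _; rewrite mderivD mulrDl scalerDr.
Qed.
Lemma pbDr (R : realType) n (u v1 v2 : Mpoly R n) : pb u (v1 + v2) = pb u v1 + pb u v2.
Proof.
rewrite /pb -big_split; apply: eq_bigr => a _; rewrite -big_split.
by apply: eq_bigr => b _; rewrite mderivD mulrDr scalerDr.
Qed.
Lemma pb0l (R : realType) n (v : Mpoly R n) : pb 0 v = 0.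
Proof. by rewrite /pb big1 // => a _; rewrite big1 // => b _; rewrite mderiv0 mul0r scaler0. Qed.
Lemma pb0r (R : realType) n (v : Mpoly R n) : pb v 0 = 0.
Proof. by rewrite /pb big1 // => a _; rewrite big1 // => b _; rewrite mderiv0 mulr0 scaler0. Qed.

Lemma pb_suml (R : realType) n (I : Type) (r : seq I) (P : pred I) (F : I -> Mpoly R n) v :
  pb (\sum_(i <- r | P i) F i) v = \sum_(i <- r | P i) pb (F i) v.
Proof. by apply: (big_morph (fun u => pb u v)); [move=> x y; rewrite pbDl | rewrite pb0l]. Qed.
Lemma pb_sumr (R : realType) n (I : Type) (r : seq I) (P : pred I) (F : I -> Mpoly R n) v :
  pb v (\sum_(i <- r | P i) F i) = \sum_(i <- r | P i) pb v (F i).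
Proof. by apply: (big_morph (fun u => pb v u)); [move=> x y; rewrite pbDr | rewrite pb0r]. Qed.

Lemma pbMl (R : realType) n (u w v : Mpoly R n) : pb (u * w) v = u * pb w v + w * pb u v.
Proof.
rewrite /pb !mulr_sumr -big_split; apply: eq_bigr => a _.
rewrite !mulr_sumr -big_split; apply: eq_bigr => b _.
rewrite mderivM -!mul_mpolyC /=; ring.
Qed.
Lemma pbMr (R : realType) n (u w v : Mpoly R n) : pb v (u * w) = u * pb v w + w * pb v u.
Proof.
rewrite /pb !mulr_sumr -big_split; apply: eq_bigr => a _.
rewrite !mulr_sumr -big_split; apply: eq_bigr => b _.
rewrite mderivM -!mul_mpolyC /=; ring.
Qed.
Lemma pbCl (R : realType) n c (v : Mpoly R n) : pb c%:MP v = 0.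
Proof. by rewrite /pb big1 // => a _; rewrite big1 // => b _; rewrite mderivC mul0r scaler0. Qed.
Lemma pbCr (R : realType) n c (v : Mpoly R n) : pb v c%:MP = 0.
Proof. by rewrite /pb big1 // => a _; rewrite big1 // => b _; rewrite mderivC mulr0 scaler0. Qed.
Lemma pb1l (R : realType) n (v : Mpoly R n) : pb 1 v = 0.
Proof. by rewrite -mpolyC1 pbCl. Qed.
Lemma pbCMl (R : realType) n c (u v : Mpoly R n) : pb (c%:MP * u) v = c%:MP * pb u v.
Proof. by rewrite pbMl pbCl mulr0 addr0. Qed.
Lemma pbCMr (R : realType) n c (u v : Mpoly R n) : pb v (c%:MP * u) = c%:MP * pb v u.
Proof. by rewrite pbMr pbCr mulr0 addr0. Qed.
Lemma pbNl (R : realType) n (u v : Mpoly R n) : pb (- u) v = - pb u v.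
Proof. by rewrite /pb -sumrN; apply: eq_bigr => a _; rewrite -sumrN; apply: eq_bigr => b _; rewrite mderivN mulNr scalerN. Qed.
Lemma pbNr (R : realType) n (u v : Mpoly R n) : pb v (- u) = - pb v u.
Proof. by rewrite /pb -sumrN; apply: eq_bigr => a _; rewrite -sumrN; apply: eq_bigr => b _; rewrite mderivN mulrN scalerN. Qed.

Lemma Lam_anti (R : realType) n (a b : 'I_(n + n)) : Lam R b a = - Lam R a b.
Proof.
rewrite /Lam; case: (ltnP a n) => ha; case: (ltnP b n) => hb /=.
- have -> : (a == (b + n)%N :> nat) = false by lia.
  have -> : (b == (a + n)%N :> nat) = false by lia.
  by rewrite oppr0.
- by case: ifP; rewrite ?oppr0.
- by case: ifP; rewrite ?opprK ?oppr0.
- by rewrite oppr0.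
Qed.

Lemma pb_anti (R : realType) n (u v : Mpoly R n) : pb v u = - pb u v.
Proof.
rewrite /pb exchange_big -sumrN; apply: eq_bigr => a _.
rewrite -sumrN; apply: eq_bigr => b _.
by rewrite Lam_anti scaleNr mulrC.
Qed.

Lemma mderivX1 (R : realType) n (a i : 'I_(n + n)) :
  mderiv a ('X_i : Mpoly R n) = (i == a)%:R.
Proof.
rewrite mderivX mnm1E; case: eqP => [->|_]; last by rewrite scale0r.
have -> : (U_(a) - U_(a) = 0)%MM by apply/mnmP => j; rewrite mnmBE subnn mnm0E.
by rewrite mpolyX0 scale1r.
Qed.

Lemma pb_X (R : realType) n (i j : 'I_(n + n)) :
  pb ('X_i : Mpoly R n) 'X_j = (Lam R i j)%:MP.
Proof.
rewrite /pb (bigD1 i) //= [X in _ + X]big1 => [|a hai]; last first.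
  by rewrite big1 // => b _; rewrite mderivX1 (eq_sym i) (negbTE hai) mul0r scaler0.
rewrite addr0 (bigD1 j) //= [X in _ + X]big1 => [|b hbj]; last first.
  by rewrite [mderiv b _]mderivX1 (eq_sym j) (negbTE hbj) mulr0 scaler0.
by rewrite !mderivX1 !eqxx mulr1 !addr0 -mul_mpolyC mulr1.
Qed.

Lemma Lam_pq (R : realType) n (k j : 'I_n) :
  Lam R (lshift n k) (rshift n j) = (k == j)%:R.
Proof.
rewrite /Lam /= ltn_ord /=.
have -> : (n + j == k + n)%N = (k == j) by rewrite addnC eqn_add2r eq_sym.
have -> : (n + j < n)%N = false by lia.
by case: (k == j).
Qed.
Lemma Lam_pp (R : realType) n (k j : 'I_n) :
  Lam R (lshift n k) (lshift n j) = 0.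
Proof.
have := ltn_ord j; have := ltn_ord k.
rewrite /Lam /=; case: ifP => [/andP[_ /eqP h]|_]; first lia.
case: ifP => [/andP[_ /eqP h]|_] //; lia.
Qed.
Lemma Lam_qq (R : realType) n (k j : 'I_n) :
  Lam R (rshift n k) (rshift n j) = 0.
Proof.
rewrite /Lam /=; case: ifP => [/andP[h _]|_]; first lia.
case: ifP => [/andP[h _]|_] //; lia.
Qed.

Lemma pb_pp (R : realType) n (k j : 'I_n) : pb (pvar R k) (pvar R j) = 0.
Proof. by rewrite /pvar pb_X Lam_pp mpolyC0. Qed.
Lemma pb_qq (R : realType) n (k j : 'I_n) : pb (qvar R k) (qvar R j) = 0.
Proof. by rewrite /qvar pb_X Lam_qq mpolyC0. Qed.
Lemma pb_pq (R : realType) n (k j : 'I_n) : pb (pvar R k) (qvar R j) = (k == j)%:R.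
Proof. by rewrite /pvar /qvar pb_X Lam_pq mpolyC_nat. Qed.
Lemma pb_qp (R : realType) n (k j : 'I_n) : pb (qvar R j) (pvar R k) = - (k == j)%:R.
Proof. by rewrite pb_anti pb_pq. Qed.

Lemma sum_indl (R : realType) n m (F : 'I_m -> Mpoly R n) s :
  \sum_i (i == s)%:R * F i = F s.
Proof.
rewrite (bigD1 s) //= eqxx mul1r big1 ?addr0 // => i /negbTE ->.
by rewrite mul0r.
Qed.
Lemma sum_indr (R : realType) n m (F : 'I_m -> Mpoly R n) s :
  \sum_i (s == i)%:R * F i = F s.
Proof. by rewrite -(sum_indl F s); apply: eq_bigr => i _; rewrite eq_sym. Qed.

Definition Sv (R : realType) n : Mpoly R n := \sum_(k < n) pvar R k * qvar R k.
Definition Av (R : realType) n (r : 'I_n.+1) : Mpoly R n :=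
  if unlift ord0 r is Some k then pvar R k else 1.
Definition Bv (R : realType) n (c : 'I_n.+1) : Mpoly R n :=
  if unlift ord0 c is Some k then qvar R k
  else - \sum_(k < n) pvar R k * qvar R k.

Lemma pb_pS (R : realType) n (k : 'I_n) : pb (pvar R k) (Sv R n) = pvar R k.
Proof.
rewrite /Sv pb_sumr -[RHS](sum_indr (fun m => pvar R m) k).
by apply: eq_bigr => m _; rewrite pbMr pb_pq pb_pp mulr0 addr0 mulrC.
Qed.
Lemma pb_qS (R : realType) n (k : 'I_n) : pb (qvar R k) (Sv R n) = - qvar R k.
Proof.
rewrite /Sv pb_sumr -[in RHS](sum_indl (fun m => qvar R m) k) -sumrN.
by apply: eq_bigr => m _; rewrite pbMr pb_qq pb_qp mulr0 add0r mulrN mulrC.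
Qed.
Lemma pb_SS (R : realType) n : pb (Sv R n) (Sv R n) = 0.
Proof.
rewrite {1}/Sv pb_suml big1 // => m _.
by rewrite pbMl pb_qS pb_pS mulrN mulrC addNr.
Qed.

Lemma Av_lift (R : realType) n (k : 'I_n) : Av R (lift ord0 k) = pvar R k.
Proof. by rewrite /Av liftK. Qed.
Lemma Av0 (R : realType) n : Av R (ord0 : 'I_n.+1) = 1.
Proof. by rewrite /Av unlift_none. Qed.
Lemma Bv_lift (R : realType) n (k : 'I_n) : Bv R (lift ord0 k) = qvar R k.
Proof. by rewrite /Bv liftK. Qed.
Lemma Bv0 (R : realType) n : Bv R (ord0 : 'I_n.+1) = - Sv R n.
Proof. by rewrite /Bv unlift_none. Qed.

Lemma lift0_eq n (k : 'I_n) : (lift ord0 k == ord0) = false.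
Proof. by rewrite eq_sym; apply/negbTE/neq_lift. Qed.
Lemma ord0_eq_lift n (k : 'I_n) : (ord0 == lift ord0 k) = false.
Proof. by rewrite eq_sym lift0_eq. Qed.
Lemma lift_eq n (k j : 'I_n) : (lift ord0 k == lift ord0 j) = (k == j).
Proof. exact: (inj_eq (@lift_inj _ ord0)). Qed.

Lemma pb_AA (R : realType) n (r s : 'I_n.+1) : pb (Av R r) (Av R s) = 0.
Proof.
case: (unliftP ord0 r) => [k ->|->]; last by rewrite Av0 pb1l.
case: (unliftP ord0 s) => [j ->|->]; last by rewrite Av0 -mpolyC1 pbCr.
by rewrite !Av_lift pb_pp.
Qed.

Lemma pb_AB (R : realType) n (r c : 'I_n.+1) :
  pb (Av R r) (Bv R c) = (r == c)%:R - (c == ord0)%:R * Av R r.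
Proof.
case: (unliftP ord0 r) => [k ->|->]; last first.
  rewrite Av0 pb1l mulr1; case: (unliftP ord0 c) => [j ->|->].
    by rewrite ord0_eq_lift lift0_eq subrr.
  by rewrite eqxx subrr.
case: (unliftP ord0 c) => [j ->|->].
  by rewrite Av_lift Bv_lift pb_pq lift_eq lift0_eq mul0r subr0.
by rewrite Av_lift Bv0 pbNr pb_pS lift0_eq eqxx mul1r sub0r.
Qed.

Lemma pb_BA (R : realType) n (r c : 'I_n.+1) :
  pb (Bv R c) (Av R r) = (c == ord0)%:R * Av R r - (r == c)%:R.
Proof. by rewrite pb_anti pb_AB opprB. Qed.

Lemma pb_BB (R : realType) n (c d : 'I_n.+1) :
  pb (Bv R c) (Bv R d) = (d == ord0)%:R * Bv R c - (c == ord0)%:R * Bv R d.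
Proof.
case: (unliftP ord0 c) => [j ->|->]; case: (unliftP ord0 d) => [m ->|->].
- by rewrite !Bv_lift pb_qq !lift0_eq !mul0r subrr.
- by rewrite Bv_lift Bv0 pbNr pb_qS opprK lift0_eq eqxx mul1r mul0r subr0.
- by rewrite Bv_lift Bv0 pbNl pb_anti pb_qS opprK lift0_eq eqxx mul1r mul0r sub0r.
- by rewrite Bv0 pbNl pbNr opprK pb_SS eqxx subrr.
Qed.

Definition xi (R : realType) n (X : 'M[R[i]]_(n.+1)) (c : 'I_n.+1) : Mpoly R n :=
  \sum_r (X c r)%:MP * Av R r.

Lemma tilde_E (R : realType) n (X : 'M[R[i]]_(n.+1)) :
  tilde X = \sum_c xi X c * Bv R c.
Proof.
rewrite /tilde /mxtrace; under eq_bigr do rewrite mxE.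
rewrite exchange_big; apply: eq_bigr => c _; rewrite /xi mulr_suml.
by apply: eq_bigr => r _; rewrite !mxE [LHS]mulrC mulrA.
Qed.

Lemma mpolyC_sum (R : realType) n m (F : 'I_m -> R[i]) :
  (\sum_j F j)%:MP = \sum_j (F j)%:MP :> Mpoly R n.
Proof. by apply: (big_morph (fun x : R[i] => x%:MP)); [move=> x y; rewrite mpolyCD | rewrite mpolyC0]. Qed.

Lemma xi_mul (R : realType) n (X Y : 'M[R[i]]_(n.+1)) c :
  xi (X *m Y) c = \sum_m (X c m)%:MP * xi Y m.
Proof.
rewrite /xi; under eq_bigr do rewrite mxE mpolyC_sum mulr_suml.
rewrite exchange_big; apply: eq_bigr => m _; rewrite mulr_sumr.
by apply: eq_bigr => r _; rewrite mpolyCM mulrA.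
Qed.

Lemma xi_B (R : realType) n (X Y : 'M[R[i]]_(n.+1)) c :
  xi (X - Y) c = xi X c - xi Y c.
Proof.
by rewrite /xi -sumrB; apply: eq_bigr => r _; rewrite !mxE mpolyCB mulrBl.
Qed.

Lemma L1 (R : realType) n (X : 'M[R[i]]_(n.+1)) c s : pb (xi X c) (Av R s) = 0.
Proof. by rewrite /xi pb_suml big1 // => r _; rewrite pbCMl pb_AA mulr0. Qed.

Lemma L2 (R : realType) n (X : 'M[R[i]]_(n.+1)) c d :
  pb (xi X c) (Bv R d) = (X c d)%:MP - (d == ord0)%:R * xi X c.
Proof.
rewrite /xi pb_suml; under eq_bigr do rewrite pbCMl pb_AB.
rewrite mulr_sumr -(sum_indl (fun r => (X c r)%:MP) d) -sumrB.
by apply: eq_bigr => r _; ring.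
Qed.

Lemma L3 (R : realType) n (X : 'M[R[i]]_(n.+1)) s :
  pb (tilde X) (Av R s) = Av R s * xi X ord0 - xi X s.
Proof.
rewrite tilde_E pb_suml; under eq_bigr do rewrite pbMl pb_BA L1 mulr0 addr0.
rewrite -(sum_indl (fun c => Av R s * xi X c) ord0) -(sum_indr (fun c => xi X c) s).
by rewrite -sumrB; apply: eq_bigr => c _; ring.
Qed.

Lemma L4 (R : realType) n (X : 'M[R[i]]_(n.+1)) d :
  pb (tilde X) (Bv R d) = \sum_c (X c d)%:MP * Bv R c - xi X ord0 * Bv R d.
Proof.
rewrite tilde_E pb_suml; under eq_bigr do rewrite pbMl pb_BB L2.
rewrite -(sum_indl (fun c => xi X c * Bv R d) ord0) -sumrB.
by apply: eq_bigr => c _; ring.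
Qed.

Lemma L5 (R : realType) n (X Y : 'M[R[i]]_(n.+1)) d :
  pb (tilde X) (xi Y d) = xi Y d * xi X ord0 - \sum_s (Y d s)%:MP * xi X s.
Proof.
rewrite {1}/xi pb_sumr; under eq_bigr do rewrite pbCMr L3.
set z0 := xi X ord0; rewrite /xi mulr_suml -sumrB.
by apply: eq_bigr => s _; ring.
Qed.

Lemma main0 (R : realType) n (X Y : 'M[R[i]]_(n.+1)) :
  pb (tilde X) (tilde Y) = tilde (mx_br X Y).
Proof.
rewrite [tilde Y]tilde_E pb_sumr; under eq_bigr do rewrite pbMr L4 L5.
rewrite [RHS]tilde_E /mx_br; under [RHS]eq_bigr do rewrite xi_B !xi_mul.
transitivity (\sum_d (xi Y d * \sum_c (X c d)%:MP * Bv R c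
                     - Bv R d * \sum_s (Y d s)%:MP * xi X s)).
  by apply: eq_bigr => d _; ring.
rewrite sumrB; under [RHS]eq_bigr do rewrite mulrBl.
rewrite sumrB; congr (_ - _).
  under eq_bigr do rewrite mulr_sumr.
  rewrite exchange_big; apply: eq_bigr => c _; rewrite mulr_suml.
  by apply: eq_bigr => d _; ring.
by apply: eq_bigr => d _; rewrite mulrC.
Qed.

Lemma main1 (R : realType) n (X Y : 'M[R[i]]_(n.+1)) tX tY :
  tX = tilde X -> tY = tilde Y ->
  pb tX (xi Y ord0) + pb (xi X ord0) tY = xi (mx_br X Y) ord0.
Proof.
move=> eX eY.
have e1 : pb tX (xi Y ord0) = xi Y ord0 * xi X ord0
    - \sum_s (Y ord0 s)%:MP * xi X s by rewrite eX L5.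
have e2 : pb (xi X ord0) tY = - (xi X ord0 * xi Y ord0
    - \sum_s (X ord0 s)%:MP * xi Y s) by rewrite eY pb_anti L5.
rewrite e1 e2 /mx_br xi_B !xi_mul.
move: (\sum_(s < n.+1) (Y ord0 s)%:MP * xi X s) (\sum_(s < n.+1) (X ord0 s)%:MP * xi Y s).
move: (xi X ord0) (xi Y ord0) => x0 y0 a1 a2; ring.
Qed.

Definition linT (R : realType) n (phi1 : 'M[R[i]]_(n.+1) -> Mpoly R n) :=
  forall (c : R[i]) (X Y : 'M[R[i]]_(n.+1)),
      \tr X = 0 -> \tr Y = 0 -> phi1 (c *: X + Y) = c *: phi1 X + phi1 Y.

Lemma phi0 (R : realType) n (phi1 : 'M[R[i]]_(n.+1) -> Mpoly R n) :
  linT phi1 -> phi1 0 = 0.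
Proof.
move=> hl; have := hl 1 0 0 (mxtrace0 _ _) (mxtrace0 _ _).
rewrite scale1r addr0 scale1r => /(congr1 (fun z => z - phi1 0)).
by rewrite subrr addrK.
Qed.

Lemma phiD (R : realType) n (phi1 : 'M[R[i]]_(n.+1) -> Mpoly R n) X Y :
  linT phi1 -> \tr X = 0 -> \tr Y = 0 -> phi1 (X + Y) = phi1 X + phi1 Y.
Proof. by move=> hl hX hY; have := hl 1 X Y hX hY; rewrite !scale1r. Qed.

Lemma phiZ (R : realType) n (phi1 : 'M[R[i]]_(n.+1) -> Mpoly R n) c X :
  linT phi1 -> \tr X = 0 -> phi1 (c *: X) = c *: phi1 X.
Proof.
move=> hl hX; have := hl c X 0 hX (mxtrace0 _ _).
by rewrite !addr0 (phi0 hl) addr0.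
Qed.

Lemma phiB (R : realType) n (phi1 : 'M[R[i]]_(n.+1) -> Mpoly R n) X Y :
  linT phi1 -> \tr X = 0 -> \tr Y = 0 -> phi1 (X - Y) = phi1 X - phi1 Y.
Proof.
move=> hl hX hY.
have hY' : \tr ((-1) *: Y) = 0 by rewrite mxtraceZ hY mulr0.
by rewrite -scaleN1r (phiD hl hX hY') (phiZ _ hl hY) scaleN1r.
Qed.

Lemma phi_sum (R : realType) n (phi1 : 'M[R[i]]_(n.+1) -> Mpoly R n)
  (I : Type) (r : seq I) (P : pred I) (F : I -> 'M[R[i]]_(n.+1)) :
  linT phi1 -> (forall i, P i -> \tr (F i) = 0) ->
  phi1 (\sum_(i <- r | P i) F i) = \sum_(i <- r | P i) phi1 (F i).
Proof.
move=> hl hF.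
have : \tr (\sum_(i <- r | P i) F i) = 0 /\
       phi1 (\sum_(i <- r | P i) F i) = \sum_(i <- r | P i) phi1 (F i).
  apply: (big_ind2 (fun (A : 'M[R[i]]_(n.+1)) (y : Mpoly R n) => \tr A = 0 /\ phi1 A = y)).
  - by rewrite mxtrace0 (phi0 hl).
  - move=> A1 y1 A2 y2 [h1 <-] [h2 <-]; split; first by rewrite mxtraceD h1 h2 addr0.
    by rewrite phiD.
  - by move=> i hi; split => //; apply: hF.
by case.
Qed.

Lemma mxtrace_delta (R : realType) n (i j : 'I_n.+1) :
  \tr (delta_mx i j : 'M[R[i]]_(n.+1)) = (i == j)%:R.
Proof.
rewrite /mxtrace (bigD1 i) //= big1 => [|k hk]; first by rewrite !mxE eqxx addr0.
by rewrite mxE (negbTE hk).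
Qed.

Lemma tr_dd (R : realType) n (i j : 'I_n.+1) :
  \tr (delta_mx i i - delta_mx j j : 'M[R[i]]_(n.+1)) = 0.
Proof. by rewrite raddfB /= !mxtrace_delta !eqxx subrr. Qed.

Definition Dm (R : realType) n (r c : 'I_n.+1) : 'M[R[i]]_(n.+1) :=
  delta_mx r c - (r == c)%:R *: delta_mx ord0 ord0.

Lemma tr_Dm (R : realType) n (r c : 'I_n.+1) : \tr (Dm R r c) = 0.
Proof. by rewrite /Dm raddfB /= mxtraceZ !mxtrace_delta eqxx mulr1 subrr. Qed.

Lemma X_decomp (R : realType) n (X : 'M[R[i]]_(n.+1)) :
  \tr X = 0 -> X = \sum_r \sum_c X r c *: Dm R r c.
Proof.
move=> hX.
transitivity (\sum_r \sum_c X r c *: delta_mx r c - \tr X *: delta_mx ord0 ord0).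
  by rewrite hX scale0r subr0 -matrix_sum_delta.
rewrite /mxtrace scaler_suml -sumrB; apply: eq_bigr => r _.
rewrite /Dm; under [RHS]eq_bigr do rewrite scalerBr scalerA.
rewrite sumrB; congr (_ - _); rewrite -scaler_suml; congr (_ *: _).
rewrite (bigD1 r) //= eqxx mulr1 big1 ?addr0 // => c hc.
by rewrite eq_sym (negbTE hc) mulr0.
Qed.

Lemma tele (R : realType) n (phi1 : 'M[R[i]]_(n.+1) -> Mpoly R n) :
  linT phi1 ->
  phi1 (delta_mx ord0 ord0 - delta_mx (inord 1) (inord 1)) = 1 ->
  (forall k : nat, (1 <= k < n)%N ->
      phi1 (delta_mx (inord k) (inord k) - delta_mx (inord k.+1) (inord k.+1)) = 0) ->
  forall m, (1 <= m)%N -> (m <= n)%N ->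
  phi1 (delta_mx (inord m) (inord m) - delta_mx ord0 ord0) = -1.
Proof.
move=> hl hH1 hHk; elim => [//|m IH] h1 h2.
case: m IH h1 h2 => [|m] IH h1 h2.
  have -> : delta_mx (inord 1) (inord 1) - delta_mx ord0 ord0 =
     (-1) *: (delta_mx ord0 ord0 - delta_mx (inord 1) (inord 1) : 'M[R[i]]_(n.+1)).
    by rewrite scaleN1r opprB.
  by rewrite (phiZ _ hl (tr_dd _ _ _)) hH1 scaleN1r.
have -> : delta_mx (inord m.+2) (inord m.+2) - delta_mx ord0 ord0 =
   (delta_mx (inord m.+1) (inord m.+1) - delta_mx ord0 ord0) -
   (delta_mx (inord m.+1) (inord m.+1) - delta_mx (inord m.+2) (inord m.+2) : 'M[R[i]]_(n.+1)).
  by rewrite opprB [RHS]addrC [RHS]addrA subrK.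
rewrite (phiB hl (tr_dd _ _ _) (tr_dd _ _ _)) IH // ?hHk ?subr0 //; lia.
Qed.

Lemma phi_D (R : realType) n (phi1 : 'M[R[i]]_(n.+1) -> Mpoly R n) :
  linT phi1 ->
  phi1 (delta_mx ord0 ord0 - delta_mx (inord 1) (inord 1)) = 1 ->
  (forall k : nat, (1 <= k < n)%N ->
      phi1 (delta_mx (inord k) (inord k) - delta_mx (inord k.+1) (inord k.+1)) = 0) ->
  (forall k : 'I_n, phi1 (delta_mx ord0 (lift ord0 k)) = pvar R k) ->
  (forall r c : 'I_(n.+1), (0 < r)%N -> r != c -> phi1 (delta_mx r c) = 0) ->
  forall r c, phi1 (Dm R r c) = (r == ord0)%:R * Av R c - (r == c)%:R.
Proof.
move=> hl hH1 hHk hE1 hEij r c; rewrite /Dm.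
case: (eqVneq r c) => [<-|hrc].
  rewrite /= mulr1n scale1r; case: (unliftP ord0 r) => [k ->|->].
    rewrite lift0_eq mul0r sub0r.
    have -> : lift ord0 k = inord k.+1.
      by apply/val_inj; rewrite /= inordK // ltnS ltn_ord.
    by apply: (tele hl hH1 hHk) => //; apply: ltn_ord.
  by rewrite subrr (phi0 hl) eqxx Av0 mul1r subrr.
rewrite /= mulr0n scale0r !subr0.
case: (unliftP ord0 r) hrc => [k ->|->] hrc.
  by rewrite hEij ?lift0 // eq_sym (negbTE (neq_lift _ _)) mul0r.
case: (unliftP ord0 c) hrc => [j ->|->] hrc; last by case/negP: hrc.
by rewrite hE1 eqxx mul1r Av_lift.
Qed.

Lemma phi_E (R : realType) n (phi1 : 'M[R[i]]_(n.+1) -> Mpoly R n) :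
  linT phi1 ->
  phi1 (delta_mx ord0 ord0 - delta_mx (inord 1) (inord 1)) = 1 ->
  (forall k : nat, (1 <= k < n)%N ->
      phi1 (delta_mx (inord k) (inord k) - delta_mx (inord k.+1) (inord k.+1)) = 0) ->
  (forall k : 'I_n, phi1 (delta_mx ord0 (lift ord0 k)) = pvar R k) ->
  (forall r c : 'I_(n.+1), (0 < r)%N -> r != c -> phi1 (delta_mx r c) = 0) ->
  forall X, \tr X = 0 -> phi1 X = xi X ord0.
Proof.
move=> hl hH1 hHk hE1 hEij X hX.
rewrite {1}(X_decomp hX) phi_sum => [||r _] //; last first.
  by rewrite raddf_sum /= big1 // => c _; rewrite mxtraceZ tr_Dm mulr0.
transitivity (\sum_r ((r == ord0)%:R * xi X r - (X r r)%:MP)).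
  apply: eq_bigr => r _; rewrite phi_sum => [||c _] //; last first.
    by rewrite mxtraceZ tr_Dm mulr0.
  rewrite /xi -[(X r r)%:MP](sum_indr (fun c => (X r c)%:MP) r) mulr_sumr -sumrB.
  apply: eq_bigr => c _; rewrite (phiZ _ hl (tr_Dm _ _ _)).
  by rewrite (phi_D hl hH1 hHk hE1 hEij) -mul_mpolyC; ring.
rewrite sumrB sum_indl -mpolyC_sum.
by have -> : \sum_r X r r = \tr X by []; rewrite hX mpolyC0 subr0.
Qed.

Lemma Q0_0 (R : realType) n : Q0 (0 : Mpoly R n).
Proof. by move=> i _; rewrite mderiv0. Qed.
Lemma Q0_C (R : realType) n c : Q0 (c%:MP : Mpoly R n).
Proof. by move=> i _; rewrite mderivC. Qed.
Lemma Q0_nat (R : realType) n k : Q0 (k%:R : Mpoly R n).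
Proof. by rewrite -mpolyC_nat; apply: Q0_C. Qed.
Lemma Q0D (R : realType) n (u v : Mpoly R n) : Q0 u -> Q0 v -> Q0 (u + v).
Proof. by move=> hu hv i hi; rewrite mderivD hu ?hv ?addr0. Qed.
Lemma Q0N (R : realType) n (u : Mpoly R n) : Q0 u -> Q0 (- u).
Proof. by move=> hu i hi; rewrite mderivN hu ?oppr0. Qed.
Lemma Q0M (R : realType) n (u v : Mpoly R n) : Q0 u -> Q0 v -> Q0 (u * v).
Proof. by move=> hu hv i hi; rewrite mderivM hu ?hv ?mulr0 ?mul0r ?addr0. Qed.
Lemma Q0_sum (R : realType) n m (F : 'I_m -> Mpoly R n) :
  (forall j, Q0 (F j)) -> Q0 (\sum_j F j).
Proof.
move=> h; apply: (big_ind (fun u => Q0 u)) => //; [exact: Q0_0|exact: Q0D].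
Qed.
Lemma Q0_p (R : realType) n (k : 'I_n) : Q0 (pvar R k).
Proof.
move=> i hi; rewrite /pvar mderivX1.
have -> : (lshift n k == i) = false by apply/negbTE; apply/eqP => e; move: hi; rewrite -e /= leqNgt ltn_ord.
by [].
Qed.
Lemma Q0_A (R : realType) n (r : 'I_n.+1) : Q0 (Av R r).
Proof. by rewrite /Av; case: unlift => [k|]; [apply: Q0_p | rewrite -mpolyC1; apply: Q0_C]. Qed.
Lemma Q0_xi (R : realType) n (X : 'M[R[i]]_(n.+1)) c : Q0 (xi X c).
Proof. by apply: Q0_sum => r; apply: Q0M; [apply: Q0_C | apply: Q0_A]. Qed.

Lemma Q1_0 (R : realType) n : Q1 (0 : Mpoly R n).
Proof. by apply: Q0_Q1; apply: Q0_0. Qed.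
Lemma Q1D (R : realType) n (u v : Mpoly R n) : Q1 u -> Q1 v -> Q1 (u + v).
Proof. by move=> hu hv i hi; rewrite mderivD; apply: Q0D; [apply: hu|apply: hv]. Qed.
Lemma Q1N (R : realType) n (u : Mpoly R n) : Q1 u -> Q1 (- u).
Proof. by move=> hu i hi; rewrite mderivN; apply: Q0N; apply: hu. Qed.
Lemma Q1M (R : realType) n (u v : Mpoly R n) : Q0 u -> Q1 v -> Q1 (u * v).
Proof.
move=> hu hv i hi; rewrite mderivM hu // mul0r add0r.
by apply: Q0M => //; apply: hv.
Qed.
Lemma Q1_sum (R : realType) n m (F : 'I_m -> Mpoly R n) :
  (forall j, Q1 (F j)) -> Q1 (\sum_j F j).
Proof.
move=> h; apply: (big_ind (fun u => Q1 u)) => //; [exact: Q1_0|exact: Q1D].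
Qed.
Lemma Q1_q (R : realType) n (k : 'I_n) : Q1 (qvar R k).
Proof. by move=> i hi; rewrite /qvar mderivX1; apply: Q0_nat. Qed.
Lemma Q1_B (R : realType) n (c : 'I_n.+1) : Q1 (Bv R c).
Proof.
rewrite /Bv; case: unlift => [k|]; first by apply: Q1_q.
by apply/Q1N/Q1_sum => k; apply: Q1M; [apply: Q0_p|apply: Q1_q].
Qed.
Lemma Q1_tilde (R : realType) n (X : 'M[R[i]]_(n.+1)) : Q1 (tilde X).
Proof.
by rewrite tilde_E; apply: Q1_sum => c; apply: Q1M; [apply: Q0_xi|apply: Q1_B].
Qed.

Lemma pb_Q0 (R : realType) n (u v : Mpoly R n) : Q0 u -> Q0 v -> pb u v = 0.
Proof.
move=> hu hv; rewrite /pb big1 // => a _; rewrite big1 // => b _.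
have [->|hL] := eqVneq (Lam R a b) 0; first by rewrite scale0r.
have := Lam_q hL; case: (leqP n a) => ha /=.
  by rewrite hu // mul0r scaler0.
by move/esym/negbFE => hb; rewrite hv // mulr0 scaler0.
Qed.

Lemma Phi_hi (R : realType) n (phi : 'M[R[i]]_(n.+1) -> Mpoly R n) a Z m :
  (2 <= m)%N -> Phi_a phi a Z m = 0.
Proof. by rewrite /Phi_a; case: m => [|[|m]]. Qed.

Theorem proposition8p1 (R : realType) (n : nat) (hn : (1 <= n)%N)
  (phi1 : 'M[R[i]]_(n.+1) -> Mpoly R n)
  (* phi1 is linear on g = sl(n+1, C) *)
  (hlin : forall (c : R[i]) (X Y : 'M[R[i]]_(n.+1)),
      \tr X = 0 -> \tr Y = 0 -> phi1 (c *: X + Y) = c *: phi1 X + phi1 Y)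
  (* phi1(E_11 - E_22) = 1 *)
  (hH1 : phi1 (delta_mx ord0 ord0 - delta_mx (inord 1) (inord 1)) = 1)
  (* phi1(E_kk - E_{k+1,k+1}) = 0 for k = 2..n  (0-indexed rows k-1, k) *)
  (hHk : forall k : nat, (1 <= k < n)%N ->
      phi1 (delta_mx (inord k) (inord k) - delta_mx (inord k.+1) (inord k.+1)) = 0)
  (* phi1(E_{1,k+1}) = p_k for k = 1..n *)
  (hE1 : forall k : 'I_n, phi1 (delta_mx ord0 (lift ord0 k)) = pvar R k)
  (* phi1(E_ij) = 0 for i >= 2, j <> i *)
  (hEij : forall r c : 'I_(n.+1), (0 < r)%N -> r != c -> phi1 (delta_mx r c) = 0)
  : forall (a : R[i]) (X Y : 'M[R[i]]_(n.+1)), \tr X = 0 -> \tr Y = 0 ->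
      forall k : nat,
        Phi_a phi1 a (mx_br X Y) k = star_ser (Phi_a phi1 a X) (Phi_a phi1 a Y) k.
Proof.
have hl : linT phi1 := hlin.
move=> a X Y hX hY k.
have hXY : \tr (mx_br X Y) = 0 by rewrite /mx_br raddfB /= mxtrace_mulC subrr.
have pE := phi_E hl hH1 hHk hE1 hEij.
have QU : forall (Z : 'M[R[i]]_(n.+1)), \tr Z = 0 -> forall m, Q1 (Phi_a phi1 a Z m).
  move=> Z hZ m; rewrite /Phi_a; case: eqP => _; first exact: Q1_tilde.
  case: eqP => _; last exact: Q1_0.
  by rewrite pE // -mul_mpolyC; apply: Q0_Q1; apply: Q0M; [apply: Q0_C|apply: Q0_xi].
rewrite /star_ser (eq_bigr (fun m : 'I_k.+1 => pb (Phi_a phi1 a X m) (Phi_a phi1 a Y (k - m)%N))); last first.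
  by move=> m _; apply: star_pb; [exact: QU hX _ | exact: QU hY _].
case: k => [|[|k]].
- rewrite big_ord1 /Phi_a /=.
  exact: (esym (main0 X Y)).
- rewrite big_ord_recl big_ord1 /Phi_a /=.
  rewrite !pE // -!mul_mpolyC pbCMr pbCMl -mulrDr; congr (_ * _).
  exact: (esym (@main1 R n X Y _ _ erefl erefl)).
- rewrite Phi_hi // big1 // => m _.
  have [hm|hm] := leqP 2 m; first by rewrite (Phi_hi _ _ _ hm) pb0l.
  have [hm2|hm2] := leqP 2 (k.+2 - m); first by rewrite (Phi_hi _ _ _ hm2) pb0r.
  have e1 : (m : nat) = 1%N by lia.
  have e2 : (k.+2 - m)%N = 1%N by lia.
  rewrite e2 e1 /Phi_a /= !pE // -!mul_mpolyC.
  by apply: pb_Q0; apply: Q0M; [apply: Q0_C|apply: Q0_xi|apply: Q0_C|apply: Q0_xi].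
Qed.
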